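(* Let $\pi\colon(X,T)\to(Y,T)$ be a factor map between minimal subshifts. Then either $\pi$ is distal or there exists $y\in Y$ such that the fiber $\pi^{-1}(y)$ contains a right asymptotic pair or a left asymptotic pair.
   Context: A factor map is distal if whenever $\pi(x)=\pi(x')$ and $x\neq x'$, $\inf_{k\in\mathbb{Z}}\mathrm{dist}(T^kx,T^kx')>0$. A pair $(x,\tilde x)\in\mathcal{A}^{\mathbb{Z}}\times\mathcal{A}^{\mathbb{Z}}$ is right asymptotic if there is $k\in\mathbb{Z}$ with $x_{(k,\infty)}=\tilde x_{(k,\infty)}$ and $x_k\neq\tilde x_k$; left asymptotic is defined symmetrically with $(-\infty,k)$. *)

(* Defs.v *)
From mathcomp Require Import all_boot all_algebra.
From mathcomp Require Import boolp.
From Stdlib Require Import Reals.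
Set Implicit Arguments. Unset Strict Implicit. Unset Printing Implicit Defensive.
Import GRing.Theory Num.Theory.

Local Open Scope ring_scope.

Definition config (A : finType) := int -> A.

Definition shift (A : finType) (x : config A) : config A := fun i => x (i + 1).
Definition shiftk (A : finType) (k : int) (x : config A) : config A :=
  fun i => x (i + k).

Definition agree_on (A : finType) (n : nat) (x y : config A) : Prop :=
  forall i : int, (`|i| <= n)%N -> x i = y i.

(* Standard metric on A^Z: dist x y = 0 if x = y, and 2^{-m} otherwise,
   where m = min { |i| : x_i <> y_i }. *)
Definition first_diff (A : finType) (x y : config A) : nat :=
  match pselect (exists n : nat, exists i : int, `|i|%N = n /\ x i <> y i) with
  | left h => ex_minn (P := fun n => `[< exists i : int, `|i|%N = n /\ x i <> y i >])
                 (let: ex_intro n hn := h in ex_intro _ n (asboolT hn))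
  | right _ => 0%N
  end.

Definition dist (A : finType) (x y : config A) : R :=
  match pselect (x = y) with
  | left _ => 0%R
  | right _ => ((/ 2) ^ first_diff x y)%R
  end.

Definition closed_set (A : finType) (X : config A -> Prop) : Prop :=
  forall y : config A, (forall n : nat, exists x, X x /\ agree_on n x y) -> X y.

Definition shift_invariant (A : finType) (X : config A -> Prop) : Prop :=
  forall x : config A, X x <-> X (shift x).

Definition subshift (A : finType) (X : config A -> Prop) : Prop :=
  closed_set X /\ shift_invariant X.

Definition minimal_subshift (A : finType) (X : config A -> Prop) : Prop :=
  subshift X /\ (exists x, X x) /\
  forall Z : config A -> Prop, subshift Z -> (exists z, Z z) ->
    (forall z, Z z -> X z) -> forall x, X x -> Z x.

Definition factor_map (A B : finType) (X : config A -> Prop) (Y : config B -> Prop)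
    (pi : config A -> config B) : Prop :=
  [/\ (forall x, X x -> Y (pi x)),
      (forall y, Y y -> exists x, X x /\ pi x = y),
      (forall x, X x -> pi (shift x) = shift (pi x)) &
      (forall x, X x -> forall n : nat, exists m : nat,
          forall x', X x' -> agree_on m x x' -> agree_on n (pi x) (pi x'))].

Definition distal (A B : finType) (X : config A -> Prop)
    (pi : config A -> config B) : Prop :=
  forall x x', X x -> X x' -> pi x = pi x' -> x <> x' ->
    exists eps : R, (0 < eps)%R /\
      forall k : int, (eps <= dist (shiftk k x) (shiftk k x'))%R.

Definition right_asymptotic (A : finType) (x x' : config A) : Prop :=
  exists k : int, (forall i : int, k < i -> x i = x' i) /\ x k <> x' k.

Definition left_asymptotic (A : finType) (x x' : config A) : Prop :=
  exists k : int, (forall i : int, i < k -> x i = x' i) /\ x k <> x' k.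

(* Main.v *)
Require Import Defs.
From mathcomp Require Import all_boot all_algebra zify boolp.
From Stdlib Require Import Reals Lra.
Set Implicit Arguments. Unset Strict Implicit. Unset Printing Implicit Defensive.
Import GRing.Theory Num.Theory.

Section Gen.
Local Open Scope ring_scope.
Variable C : finType.

Lemma agree_mono m n (x y : config C) : (m <= n)%nat -> agree_on n x y -> agree_on m x y.
Proof. move=> hmn h i hi; apply: h; lia. Qed.

Lemma agree_sym n (x y : config C) : agree_on n x y -> agree_on n y x.
Proof. by move=> h i hi; rewrite h. Qed.

Lemma agree_trans n (x y z : config C) : agree_on n x y -> agree_on n y z -> agree_on n x z.
Proof. by move=> h1 h2 i hi; rewrite h1 // h2. Qed.

Lemma fd_agree (u v : config C) (i : int) : (`|i|%nat < first_diff u v)%nat -> u i = v i.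
Proof.
rewrite /first_diff; case: pselect => [h|_]; last by [].
case: ex_minnP => m _ hmin hlt.
apply: contrapT => hne.
have : (m <= `|i|%nat)%nat.
  apply: hmin; apply/asboolP; exists i; split => //.
lia.
Qed.

Lemma shiftk_inj k (u v : config C) : shiftk k u = shiftk k v -> u = v.
Proof.
move=> h; apply: funext => i.
have := congr1 (fun f => f (i - k)) h; rewrite /shiftk /=.
by rewrite subrK.
Qed.

Lemma shift_shiftk k (u : config C) : shift (shiftk k u) = shiftk (k + 1) u.
Proof. apply: funext => i; rewrite /shift /shiftk; congr u; lia. Qed.

Lemma shiftk_X (X : config C -> Prop) : shift_invariant X ->
  forall x k, X x -> X (shiftk k x).
Proof.
move=> hinv x k hx.
have H : forall n : nat, X (shiftk n x) /\ X (shiftk (- n%:Z) x).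
  elim => [|n [IH1 IH2]].
    have -> : shiftk 0 x = x by apply: funext => i; rewrite /shiftk addr0.
    by [].
  split.
    have -> : (n.+1)%:Z = n%:Z + 1 by lia.
    by rewrite -shift_shiftk; apply: (proj1 (hinv _)).
  apply: (proj2 (hinv _)); rewrite shift_shiftk.
  by have -> : - (n.+1)%:Z + 1 = - n%:Z by lia.
case: k => n; first exact: (H n).1.
rewrite NegzE; exact: (H n.+1).2.
Qed.

Lemma pigeon (F : finType) (f : nat -> F) (P : nat -> Prop) :
  (forall N, exists n, (N <= n)%nat /\ P n) ->
  exists v, forall N, exists n, [/\ (N <= n)%nat, P n & f n = v].
Proof.
move=> hP; apply: contrapT => hv.
have hb : forall v : F, exists N, forall n, (N <= n)%nat -> P n -> f n <> v.
  move=> v; apply: contrapT => hn; apply: hv; exists v => N.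
  apply: contrapT => hN; apply: hn; exists N => n hn1 hPn hf.
  by apply: hN; exists n.
case: (choice hb) => g hg.
have [n [hn hPn]] := hP (\max_(v : F) g v).
apply: (hg (f n) n _ hPn erefl).
apply: leq_trans hn; exact: leq_bigmax.
Qed.

Fixpoint seqc (T : Type) (c0 : T) (g : nat * T -> T) (m : nat) : T :=
  match m with 0 => c0 | m'.+1 => g (m', seqc c0 g m') end.

Lemma compactC (w : nat -> config C) :
  exists c : config C, forall m N, exists n, (N <= n)%nat /\ agree_on m (w n) c.
Proof.
pose Inf m c := forall N, exists n, (N <= n)%nat /\ agree_on m (w n) c.
have step : forall m c, Inf m c -> exists c', Inf m.+1 c' /\ agree_on m c c'.
  move=> m c hc.
  have [v hv] := pigeon (fun n => (w n (- (m.+1)%:Z), w n (m.+1)%:Z)) hc.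
  have [n0 [_ hn0 hf0]] := hv 0%nat.
  exists (w n0); split; last exact: agree_sym.
  move=> N; have [n [hn hag hf]] := hv N; exists n; split => // i hi.
  have : (`|i| <= m%:Z) \/ i = (m.+1)%:Z \/ i = - (m.+1)%:Z by lia.
  case=> [hi'|[->|->]].
  - by rewrite hag // hn0.
  - by rewrite -hf0 in hf; have := congr1 snd hf.
  - by rewrite -hf0 in hf; have := congr1 fst hf.
have [c0 hc0] : exists c0, Inf 0%nat c0.
  have [v hv] := pigeon (fun n => w n 0) (P := fun _ => True)
     (fun N => ex_intro _ N (conj (leqnn N) I)).
  have [n0 [_ _ hf0]] := hv 0%nat.
  exists (w n0) => N; have [n [hn _ hf]] := hv N; exists n; split => // i hi.
  have -> : i = 0 by lia.
  by rewrite hf hf0.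
have hs : forall p : nat * config C, exists c',
    Inf p.1 p.2 -> Inf p.1.+1 c' /\ agree_on p.1 p.2 c'.
  move=> p; case: (pselect (Inf p.1 p.2)) => h.
    by have [c' hc'] := step _ _ h; exists c'.
  by exists c0.
case: (choice hs) => g hg.
pose cs := seqc c0 g.
have hinf : forall m, Inf m (cs m) /\ agree_on m (cs m) (cs m.+1).
  elim => [|m [IH1 IH2]].
    by split; [exact: hc0 | exact: (hg (0%nat, c0) hc0).2].
  have h1 := (hg (m, cs m) IH1).1.
  split => //; exact: (hg (m.+1, cs m.+1) h1).2.
have coh : forall m k, (k <= m)%nat -> agree_on k (cs k) (cs m).
  elim => [|m IH] k hk.
    by have -> : k = 0%nat by lia.
  case: (ltnP m k) => hmk.
    by have -> : k = m.+1 by lia.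
  apply: agree_trans (IH k hmk) _.
  exact: agree_mono hmk (hinf m).2.
exists (fun i => cs `|i|%nat i) => m N.
have [n [hn hag]] := (hinf m).1 N.
exists n; split => // i hi.
rewrite hag //.
rewrite /=; apply: esym; apply: (coh m `|i|%nat); lia.
Qed.

End Gen.

Section Main.
Local Open Scope ring_scope.
Variables (A B : finType) (X : config A -> Prop) (pi : config A -> config B).
Hypothesis hinv : shift_invariant X.
Hypothesis hcl : Defs.closed_set X.
Hypothesis hcomm : forall x, X x -> pi (shift x) = shift (pi x).
Hypothesis hcont : forall x, X x -> forall n : nat, exists m : nat,
          forall x', X x' -> agree_on m x x' -> agree_on n (pi x) (pi x').

Lemma shift_inj (C : finType) (u v : config C) : shift u = shift v -> u = v.
Proof.
move=> h; apply: (@shiftk_inj C 1); apply: funext => i.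
exact: (congr1 (fun f => f i) h).
Qed.

Lemma pi_shiftk x k : X x -> pi (shiftk k x) = shiftk k (pi x).
Proof.
move=> hx.
have H : forall n : nat, pi (shiftk n x) = shiftk n (pi x) /\
                         pi (shiftk (- n%:Z) x) = shiftk (- n%:Z) (pi x).
  elim => [|n [IH1 IH2]].
    have e : forall (C : finType) (u : config C), shiftk 0 u = u.
      by move=> C u; apply: funext => i; rewrite /shiftk addr0.
    by rewrite !oppr0 !e.
  have e1 : forall (C : finType) (u : config C),
      shiftk (n.+1)%:Z u = shift (shiftk n u).
    by move=> C u; rewrite shift_shiftk; f_equal; lia.
  have e2 : forall (C : finType) (u : config C),
      shiftk (- n%:Z) u = shift (shiftk (- (n.+1)%:Z) u).
    by move=> C u; rewrite shift_shiftk; f_equal; lia.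
  split.
    by rewrite !e1 hcomm ?IH1 //; apply: shiftk_X.
  apply: shift_inj.
  rewrite -hcomm; last exact: shiftk_X.
  by rewrite -!e2.
case: k => n; first exact: (H n).1.
rewrite NegzE; exact: (H n.+1).2.
Qed.

Lemma limit_pair x x' (s : int) : X x -> X x' -> pi x = pi x' ->
  (s = 1 \/ s = -1) ->
  (forall n : nat, exists d, x d <> x' d /\
      forall i : nat, (0 < i <= n)%nat -> x (d + s * i%:Z) = x' (d + s * i%:Z)) ->
  exists z z', [/\ X z, X z', pi z = pi z', z 0 <> z' 0 &
     forall i : nat, (0 < i)%nat -> z (s * i%:Z) = z' (s * i%:Z)].
Proof.
move=> hx hx' hp hs hW.
case: (choice hW) => dn hdn.
pose w n : config (prod A A) := fun i => (shiftk (dn n) x i, shiftk (dn n) x' i).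
have [c hc] := compactC w.
pose z i := (c i).1; pose z' i := (c i).2.
have key : forall m n, agree_on m (w n) c ->
    agree_on m z (shiftk (dn n) x) /\ agree_on m z' (shiftk (dn n) x').
  move=> m n h; split => i hi; rewrite /z /z' -h //.
have hz : X z.
  apply: hcl => m; have [n [_ h]] := hc m 0%nat.
  exists (shiftk (dn n) x); split; first exact: shiftk_X.
  exact: agree_sym (key _ _ h).1.
have hz' : X z'.
  apply: hcl => m; have [n [_ h]] := hc m 0%nat.
  exists (shiftk (dn n) x'); split; first exact: shiftk_X.
  exact: agree_sym (key _ _ h).2.
exists z, z'; split => //.
- apply: funext => j.
  have [m1 hm1] := hcont hz `|j|%nat.
  have [m2 hm2] := hcont hz' `|j|%nat.
  have [n [_ h]] := hc (maxn m1 m2) 0%nat.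
  have [k1 k2] := key _ _ h.
  have a1 := hm1 _ (shiftk_X hinv (dn n) hx) (agree_mono (leq_maxl m1 m2) k1).
  have a2 := hm2 _ (shiftk_X hinv (dn n) hx') (agree_mono (leq_maxr m1 m2) k2).
  rewrite a1 ?a2; last by lia.
    by rewrite !pi_shiftk // hp.
  lia.
- have [n [_ h]] := hc 0%nat 0%nat.
  have [k1 k2] := key _ _ h.
  rewrite k1 ?k2 //; rewrite /shiftk add0r; exact: (hdn n).1.
- move=> i hi.
  have [n [hn h]] := hc i i.
  have [k1 k2] := key _ _ h.
  rewrite k1 ?k2; try (case: hs => ->; lia).
  rewrite /shiftk addrC; apply: (hdn n).2; lia.
Qed.

End Main.

Section Dich.
Local Open Scope ring_scope.
Variable C : finType.

Definition Wit (x x' : config C) (s : int) (n : nat) := exists d, x d <> x' d /\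
  forall i : nat, (0 < i <= n)%nat -> x (d + s * i%:Z) = x' (d + s * i%:Z).

Lemma wit (x x' : config C) (s : int) (n : nat) (k j0 : int) : (s = 1 \/ s = -1) ->
  agree_on n (shiftk k x) (shiftk k x') -> x j0 <> x' j0 ->
  n%:Z < s * (k - j0) -> Wit x x' s n.
Proof.
move=> hs hag hj0 hlt.
pose b := k - s * (n.+1)%:Z.
have exP : exists t : nat, (x (b - s * t%:Z) != x' (b - s * t%:Z)).
  pose u := s * (k - j0) - (n.+1)%:Z; pose t0 := absz u; exists t0.
  have -> : b - s * t0%:Z = j0.
    by rewrite /b /t0 /u; case: hs => ?; subst s; lia.
  by apply/eqP.
case: (ex_minnP exP) => t ht hmin.
exists (b - s * t%:Z); split; first by apply/eqP.
move=> i /andP[hi0 hin].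
case: (leqP i t) => hit.
- have e : b - s * t%:Z + s * i%:Z = b - s * ((t - i)%nat)%:Z.
    by rewrite /b; case: hs => ?; subst s; lia.
  rewrite e; apply: contrapT => hne.
  have := hmin _ (introN eqP hne); lia.
- have hw : (`|s * (((i - t)%nat)%:Z - n%:Z - 1)| <= n%:Z).
    by case: hs => ?; subst s; lia.
  have := hag _ hw; rewrite /shiftk.
  have -> : s * (((i - t)%nat)%:Z - n%:Z - 1) + k = b - s * t%:Z + s * i%:Z.
    by rewrite /b; case: hs => ?; subst s; lia.
  by [].
Qed.

Lemma dich (x x' : config C) : x <> x' ->
  (forall n : nat, exists k, agree_on n (shiftk k x) (shiftk k x')) ->
  exists s, (s = 1 \/ s = -1) /\ forall n, Wit x x' s n.
Proof.
move=> hne hag.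
have [j0 hj0] : exists j0, x j0 <> x' j0.
  apply: contrapT => h; apply: hne; apply: funext => j.
  apply: contrapT => hj; apply: h; by exists j.
have mono : forall s m n, (m <= n)%nat -> Wit x x' s n -> Wit x x' s m.
  move=> s m n hmn [d [hd h]]; exists d; split => // i hi; apply: h; lia.
have inwin : forall n k, agree_on n (shiftk k x) (shiftk k x') ->
    n%:Z < 1 * (k - j0) \/ n%:Z < -1 * (k - j0).
  move=> n k h.
  have : (`|j0 - k| <= n%:Z) \/ n%:Z < 1 * (k - j0) \/ n%:Z < -1 * (k - j0) by lia.
  case=> [hin|//].
  exfalso; have := h _ hin; rewrite /shiftk subrK; exact: hj0.
case: (pselect (forall n, Wit x x' 1 n)) => hall.
  by exists 1; split; [left|].
have [n0 hn0] : exists n0, ~ Wit x x' 1 n0.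
  apply: contrapT => h; apply: hall => n; apply: contrapT => hn; apply: h; by exists n.
exists (-1); split; first by right.
move=> n; have [k hk] := hag (maxn n n0).
case: (inwin _ _ hk) => h.
- exfalso; apply: hn0; apply: (mono 1 n0 (maxn n n0)); first exact: leq_maxr.
  exact: (wit (or_introl erefl) hk hj0 h).
- apply: (mono _ n (maxn n n0) (leq_maxl _ _)).
  exact: (wit (or_intror erefl) hk hj0 h).
Qed.

End Dich.

Section Real.
Local Open Scope R_scope.
Lemma pow_half_le (f n : nat) : (f <= n)%nat -> (/2) ^ n <= (/2) ^ f.
Proof.
move=> h; rewrite !pow_inv; apply: Rinv_le_contravar.
  apply: pow_lt; lra.
apply: Rle_pow; first lra.
exact/leP.
Qed.
Lemma pow_half_pos (n : nat) : 0 < (/2) ^ n.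
Proof. apply: pow_lt; lra. Qed.
End Real.

Lemma nondistal (A B : finType) (X : config A -> Prop) (pi : config A -> config B) :
  ~ distal X pi -> exists x x', [/\ X x, X x', pi x = pi x', x <> x' &
    forall n : nat, exists k, agree_on n (shiftk k x) (shiftk k x')].
Proof.
move=> hnd; apply: contrapT => H; apply: hnd => x x' hx hx' hp hne.
case: (pselect (forall n : nat, exists k, agree_on n (shiftk k x) (shiftk k x'))) => hall.
  by exfalso; apply: H; exists x, x'.
have [n hn] : exists n : nat, forall k, ~ agree_on n (shiftk k x) (shiftk k x').
  apply: contrapT => h; apply: hall => n; apply: contrapT => hk; apply: h.
  exists n => k hk'; apply: hk; by exists k.
exists ((/2) ^ n)%R; split; first exact: pow_half_pos.
move=> k; rewrite /Defs.dist; case: pselect => [heq|hneq].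
  by exfalso; apply: hne; exact: (shiftk_inj heq).
apply: pow_half_le.
rewrite leqNgt; apply/negP => hlt; apply: (hn k) => i hi.
apply: fd_agree; lia.
Qed.

Section Fin.
Local Open Scope ring_scope.
Lemma final_step (A B : finType) (X : config A -> Prop) (Y : config B -> Prop)
    (pi : config A -> config B) :
  minimal_subshift X -> factor_map X Y pi -> ~ distal X pi ->
  exists y : config B, Y y /\
    exists x x' : config A, [/\ X x, X x', pi x = y, pi x' = y &
      (right_asymptotic x x' \/ left_asymptotic x x')].
Proof.
move=> [[hcl hinv] _] [hXY _ hcomm hcont] hd.
have [x [x' [hx hx' hp hne hag]]] := nondistal hd.
have [s [hs hW]] := dich hne hag.
have [z [z' [hz hz' hpz hz0 hzi]]] := limit_pair hinv hcl hcomm hcont hx hx' hp hs hW.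
exists (pi z); split; first exact: hXY.
exists z, z'; split => //.
case: hs => es; subst s; [left|right]; exists 0; split => // i hi.
- have e : 1 * (`|i|%nat)%:Z = i by lia.
  have := hzi `|i|%nat; rewrite e; apply; lia.
- have e : -1 * (`|i|%nat)%:Z = i by lia.
  have := hzi `|i|%nat; rewrite e; apply; lia.
Qed.
End Fin.

Theorem lemma6p4 (A B : finType) (X : config A -> Prop) (Y : config B -> Prop)
    (pi : config A -> config B) :
  minimal_subshift X -> minimal_subshift Y -> factor_map X Y pi ->
  distal X pi \/
  exists y : config B, Y y /\
    exists x x' : config A, [/\ X x, X x', pi x = y, pi x' = y &
      (right_asymptotic x x' \/ left_asymptotic x x')].
Proof.
move=> hX _ hf.
case: (pselect (distal X pi)) => hd; first by left.
right; exact: final_step hX hf hd.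
Qed.
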